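(* For any set $\mathcal{O}$ of upwards closed modalities, the logical preorder $\sqsubseteq_{\mathcal{V}^+}$ (on closed values and on closed computations of each type) is identical to applicative $\mathcal{O}$-similarity.
   Context: Language: types $\tau ::= \mathbf{1} \mid \mathbf{N} \mid \tau \to \tau'$; signature $\Sigma$ of effect operations with arities $\alpha^n\to\alpha$, $\mathbf{N}\times\alpha^n\to\alpha$, $\alpha^{\mathbf{N}}\to\alpha$ or $\mathbf{N}\times\alpha^{\mathbf{N}}\to\alpha$. Values $V ::= * \mid Z \mid S(V) \mid \lambda x{:}\tau.M \mid x$; computations $M ::= VW \mid \mathbf{return}\,V \mid \mathbf{let}\ M\Rightarrow x\ \mathbf{in}\ N \mid \mathbf{fix}(V) \mid \mathbf{case}\ V\ \mathbf{of}\ \{Z\Rightarrow M; S(x)\Rightarrow N\} \mid \sigma(M_0,\dots) \mid \sigma(V;M_0,\dots) \mid \sigma(V)\mid\sigma(V;W)$, simply typed call-by-value. $\mathit{Val}(\tau)$, $\mathit{Com}(\tau)$: closed values/computations; $\overline{n}=S^n(Z)$. Effect trees $TX$: possibly infinite trees with leaves $\bot$ or elements of $X$ and internal nodes labelled by effect operations $\sigma$ (or $\sigma_m$, $m\in\mathbb{N}$, for arities with a $\mathbf{N}$ parameter) with $n$ or $\mathbb{N}$-many children according to the arity; $t\le t'$ iff $t$ results from $t'$ by replacing subtrees with $\bot$. Each $M\in\mathit{Com}(\tau)$ has an operational effect tree $|M|\in T(\mathit{Val}(\tau))$ from call-by-value evaluation (leaves = returned values, nodes = effect operations encountered, $\bot$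 = divergence). Modalities: set $\mathcal{O}$, each $o$ with $[\![o]\!]\subseteq T\mathbf{1}$; for $t\in TX$, $P\subseteq X$, $t[\in P]\in T\mathbf{1}$ replaces leaves in $P$ by $*$ and other $X$-leaves by $\bot$; $o(A)=\{t\mid t[\in A]\in[\![o]\!]\}$. Upwards closed: $[\![o]\!]$ upward closed under $\le$. Logic $\mathcal{V}^+$: value formulas $VF(\tau)$ and computation formulas $CF(\tau)$: $\{n\}\in VF(\mathbf{N})$; $(V\mapsto\Phi)\in VF(\tau\to\tau')$ for $V\in\mathit{Val}(\tau)$, $\Phi\in CF(\tau')$; $o\,\phi\in CF(\tau)$ for $o\in\mathcal{O}$, $\phi\in VF(\tau)$; closed under arbitrary $\bigwedge,\bigvee$ (no negation). Semantics: $W\models\{n\}$ iff $W=\overline{n}$; $W\models(V\mapsto\Phi)$ iff $WV\models\Phi$; $M\models o\phi$ iff $|M|[\in\{V\mid V\models\phi\}]\in[\![o]\!]$. $V\sqsubseteq_{\mathcal{V}^+}W$ iff all formulas satisfied by $V$ are satisfied by $W$ (similarly for computations). Relator: for $R\subseteq X\times Y$ and $A\subseteq X$, $R[A]=\{y\mid\exists x\in A,\ xRy\}$; $t\,\mathcal{O}(R)\,t'$ iff $\forall A\subseteq X\ \forall o\in\mathcal{O}$, $t\in o(A)\Rightarrow t'\in o(R[A])$. An applicative $\mathcal{O}$-simulation is a family $R^v_\tau\subseteq\mathit{Val}(\tau)^2$, $R^c_\tau\subseteq\mathit{Com}(\tau)^2$ with: (1) $V R^v_{\mathbf{N}} W\Rightarrow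 V=W$; (2) $M R^c_\tau N\Rightarrow |M|\,\mathcal{O}(R^v_\tau)\,|N|$; (3) $V R^v_{\tau'\to\tau} W\Rightarrow \forall U\in\mathit{Val}(\tau')$, $VU\,R^c_\tau\,WU$. Applicative $\mathcal{O}$-similarity is the union of all applicative $\mathcal{O}$-simulations. *)

(* Defs.v *)
From Stdlib Require Import List Arith Lia ClassicalEpsilon.
Import ListNotations.

Set Implicit Arguments.

Inductive ty : Type :=
| TUnit : ty
| TNat : ty
| TArr : ty -> ty -> ty.

Inductive arity : Type :=
| AFin  : nat -> arity    (* alpha^n -> alpha *)
| APFin : nat -> arity    (* N x alpha^n -> alpha *)
| AInf  : arity           (* alpha^N -> alpha *)
| APInf : arity.          (* N x alpha^N -> alpha *)

Record signature : Type := Signature {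
  op : Type;
  op_arity : op -> arity
}.

(* parameter carried by a node label (sigma, or sigma_m) *)
Definition param_of (a : arity) : Type :=
  match a with AFin _ | AInf => unit | APFin _ | APInf => nat end.

(* index set of the children of a node *)
Definition child_of (a : arity) : Type :=
  match a with
  | AFin n | APFin n => {i : nat | i < n}
  | AInf | APInf => nat
  end.

Definition mk_param (a : arity) (p : nat) : param_of a :=
  match a as a0 return param_of a0 with
  | AFin _ | AInf => tt
  | APFin _ | APInf => p
  end.

Definition child_nat (a : arity) : child_of a -> nat :=
  match a as a0 return child_of a0 -> nat with
  | AFin _ | APFin _ => fun i => proj1_sig i
  | AInf | APInf => fun i => i
  end.

Section Language.
Variable Sg : signature.

(* Syntax (de Bruijn indices; lambda-abstractions are annotated). *)
Inductive val : Type :=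
| VUnit : val
| VZ : val
| VS : val -> val
| VLam : ty -> comp -> val          (* \x:tau. M   (binds index 0) *)
| VVar : nat -> val
with comp : Type :=
| CApp : val -> val -> comp
| CRet : val -> comp
| CLet : comp -> comp -> comp       (* let M => x in N  (N binds index 0) *)
| CFix : val -> comp
| CCase : val -> comp -> comp -> comp
    (* case V of {Z => M; S(x) => N}   (N binds index 0) *)
| COp : op Sg -> list comp -> comp
| COpP : op Sg -> val -> list comp -> comp
| COpF : op Sg -> val -> comp
| COpPF : op Sg -> val -> val -> comp.

Fixpoint num (n : nat) : val :=
  match n with 0 => VZ | S n' => VS (num n') end.

Fixpoint nat_of_val (v : val) : option nat :=
  match v with
  | VZ => Some 0
  | VS v' => option_map S (nat_of_val v')
  | _ => None
  end.

Inductive vty : list ty -> val -> ty -> Prop :=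
| ty_unit G : vty G VUnit TUnit
| ty_z G : vty G VZ TNat
| ty_s G v : vty G v TNat -> vty G (VS v) TNat
| ty_lam G t t' m : cty (t :: G) m t' -> vty G (VLam t m) (TArr t t')
| ty_var G n t : nth_error G n = Some t -> vty G (VVar n) t
with cty : list ty -> comp -> ty -> Prop :=
| ty_app G v w t t' : vty G v (TArr t t') -> vty G w t -> cty G (CApp v w) t'
| ty_ret G v t : vty G v t -> cty G (CRet v) t
| ty_let G m n t t' : cty G m t -> cty (t :: G) n t' -> cty G (CLet m n) t'
| ty_fix G v r t :
    vty G v (TArr (TArr r t) (TArr r t)) -> cty G (CFix v) (TArr r t)
| ty_case G v m n t :
    vty G v TNat -> cty G m t -> cty (TNat :: G) n t -> cty G (CCase v m n) t
| ty_op G s ms t :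
    op_arity Sg s = AFin (length ms) -> Forall (fun m => cty G m t) ms ->
    cty G (COp s ms) t
| ty_opp G s v ms t :
    op_arity Sg s = APFin (length ms) -> vty G v TNat ->
    Forall (fun m => cty G m t) ms -> cty G (COpP s v ms) t
| ty_opf G s v t :
    op_arity Sg s = AInf -> vty G v (TArr TNat t) -> cty G (COpF s v) t
| ty_oppf G s v w t :
    op_arity Sg s = APInf -> vty G v TNat -> vty G w (TArr TNat t) ->
    cty G (COpPF s v w) t.

Definition cval (t : ty) : Type := {v : val | vty [] v t}.
Definition ccomp (t : ty) : Type := {m : comp | cty [] m t}.

(* Substitution of a CLOSED value u for index k (indices above k are
   decremented).  Only closed values are ever substituted. *)
Fixpoint subst_v (k : nat) (u : val) (v : val) : val :=
  match v with
  | VUnit => VUnit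
  | VZ => VZ
  | VS v' => VS (subst_v k u v')
  | VLam t m => VLam t (subst_c (S k) u m)
  | VVar n => if Nat.eqb n k then u else if Nat.ltb k n then VVar (n - 1) else VVar n
  end
with subst_c (k : nat) (u : val) (m : comp) : comp :=
  match m with
  | CApp v w => CApp (subst_v k u v) (subst_v k u w)
  | CRet v => CRet (subst_v k u v)
  | CLet m1 n => CLet (subst_c k u m1) (subst_c (S k) u n)
  | CFix v => CFix (subst_v k u v)
  | CCase v m1 n => CCase (subst_v k u v) (subst_c k u m1) (subst_c (S k) u n)
  | COp s ms => COp s (map (subst_c k u) ms)
  | COpP s v ms => COpP s (subst_v k u v) (map (subst_c k u) ms)
  | COpF s v => COpF s (subst_v k u v)
  | COpPF s v w => COpPF s (subst_v k u v) (subst_v k u w)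
  end.

(* Call-by-value evaluation to a "head": either a returned value, or an
   effect operation node with its (computation) continuations. *)
Inductive res : Type :=
| RRet : val -> res
| RNode : forall s : op Sg, param_of (op_arity Sg s) -> (nat -> comp) -> res.

Inductive eval : comp -> res -> Prop :=
| e_ret v : eval (CRet v) (RRet v)
| e_app t m w r : eval (subst_c 0 w m) r -> eval (CApp (VLam t m) w) r
| e_let_ret m n v r :
    eval m (RRet v) -> eval (subst_c 0 v n) r -> eval (CLet m n) r
| e_let_node m n s p k :
    eval m (RNode s p k) ->
    eval (CLet m n) (RNode s p (fun i => CLet (k i) n))
| e_fix r t b res0 :
    (* fix(V) --> V (\x:r. let fix(V) => y in y x) *)
    eval (CApp (VLam (TArr r t) b)
               (VLam r (CLet (CFix (VLam (TArr r t) b)) (CApp (VVar 0) (VVar 1)))))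
         res0 ->
    eval (CFix (VLam (TArr r t) b)) res0
| e_case_z m n r : eval m r -> eval (CCase VZ m n) r
| e_case_s v m n r : eval (subst_c 0 v n) r -> eval (CCase (VS v) m n) r
| e_op s ms :
    op_arity Sg s = AFin (length ms) ->
    eval (COp s ms) (RNode s (mk_param _ 0) (fun i => nth i ms (CRet VUnit)))
| e_opp s v p ms :
    op_arity Sg s = APFin (length ms) -> nat_of_val v = Some p ->
    eval (COpP s v ms) (RNode s (mk_param _ p) (fun i => nth i ms (CRet VUnit)))
| e_opf s v :
    op_arity Sg s = AInf ->
    eval (COpF s v) (RNode s (mk_param _ 0) (fun i => CApp v (num i)))
| e_oppf s v w p :
    op_arity Sg s = APInf -> nat_of_val v = Some p ->
    eval (COpPF s v w) (RNode s (mk_param _ p) (fun i => CApp w (num i))).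

(* Effect trees T X: possibly infinite trees, leaves bot or in X, nodes
   labelled by sigma (or sigma_m) with children indexed by the arity. *)
CoInductive tree (X : Type) : Type :=
| TBot : tree X
| TLeaf : X -> tree X
| TNode : forall s : op Sg, param_of (op_arity Sg s) ->
          (child_of (op_arity Sg s) -> tree X) -> tree X.
Arguments TBot {X}.

CoInductive tle {X : Type} : tree X -> tree X -> Prop :=
| tle_bot t : tle TBot t
| tle_leaf x : tle (TLeaf x) (TLeaf x)
| tle_node s p k k' :
    (forall i, tle (k i) (k' i)) -> tle (TNode s p k) (TNode s p k').

CoFixpoint tmem {X : Type} (P : X -> Prop) (t : tree X) : tree unit :=
  match t with
  | TBot => TBot
  | TLeaf x => if excluded_middle_informative (P x) then TLeaf tt else TBot
  | TNode s p k => TNode s p (fun i => tmem P (k i))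
  end.

(* The (unique, eval being deterministic) head of a computation, if any. *)
Definition eval_res (m : comp) : option res :=
  match excluded_middle_informative (exists r, eval m r) with
  | left H => Some (proj1_sig (constructive_indefinite_description _ H))
  | right _ => None
  end.

CoFixpoint optree (m : comp) : tree val :=
  match eval_res m with
  | None => TBot
  | Some (RRet v) => TLeaf v
  | Some (RNode s p k) =>
      TNode s p (fun i => optree (k (child_nat _ i)))
  end.

Variable O : Type.
Variable sem : O -> tree unit -> Prop.

Definition upward_closed : Prop :=
  forall o t t', sem o t -> tle t t' -> sem o t'.

Inductive vform : ty -> Type :=
| FNum : nat -> vform TNat
| FMap : forall t t', cval t -> cform t' -> vform (TArr t t')
| FVAnd : forall t (I : Type), (I -> vform t) -> vform t
| FVOr : forall t (I : Type), (I -> vform t) -> vform t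
with cform : ty -> Type :=
| FMod : forall t, O -> vform t -> cform t
| FCAnd : forall t (I : Type), (I -> cform t) -> cform t
| FCOr : forall t (I : Type), (I -> cform t) -> cform t.

Fixpoint vsat {t : ty} (phi : vform t) (w : val) {struct phi} : Prop :=
  match phi with
  | FNum n => w = num n
  | FMap v Phi => csat Phi (CApp w (proj1_sig v))
  | FVAnd f => forall i, vsat (f i) w
  | FVOr f => exists i, vsat (f i) w
  end
with csat {t : ty} (Phi : cform t) (m : comp) {struct Phi} : Prop :=
  match Phi with
  | FMod o phi => sem o (tmem (fun v => vsat phi v) (optree m))
  | FCAnd f => forall i, csat (f i) m
  | FCOr f => exists i, csat (f i) m
  end.

Definition lpre_v (t : ty) (V W : cval t) : Prop :=
  forall phi : vform t, vsat phi (proj1_sig V) -> vsat phi (proj1_sig W).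
Definition lpre_c (t : ty) (M N : ccomp t) : Prop :=
  forall Phi : cform t, csat Phi (proj1_sig M) -> csat Phi (proj1_sig N).

Definition lift {t : ty} (A : cval t -> Prop) : val -> Prop :=
  fun v => exists h : vty [] v t, A (exist _ v h).

Definition omod (o : O) {t : ty} (A : cval t -> Prop) (tr : tree val) : Prop :=
  sem o (tmem (lift A) tr).

Definition rimage {t : ty} (R : cval t -> cval t -> Prop) (A : cval t -> Prop)
  : cval t -> Prop := fun y => exists x, A x /\ R x y.

Definition relator (t : ty) (R : cval t -> cval t -> Prop) (tr tr' : tree val)
  : Prop :=
  forall (A : cval t -> Prop) (o : O), omod o A tr -> omod o (rimage R A) tr'.

Definition capp {t' t : ty} (V : cval (TArr t' t)) (U : cval t') : ccomp t :=
  exist _ (CApp (proj1_sig V) (proj1_sig U))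
        (ty_app (proj2_sig V) (proj2_sig U)).

Definition is_app_sim (Rv : forall t, cval t -> cval t -> Prop)
                      (Rc : forall t, ccomp t -> ccomp t -> Prop) : Prop :=
  (forall V W : cval TNat, Rv TNat V W -> proj1_sig V = proj1_sig W) /\
  (forall t (M N : ccomp t), Rc t M N ->
     relator (Rv t) (optree (proj1_sig M)) (optree (proj1_sig N))) /\
  (forall t' t (V W : cval (TArr t' t)), Rv (TArr t' t) V W ->
     forall U : cval t', Rc t (capp V U) (capp W U)).

Definition sim_v (t : ty) (V W : cval t) : Prop :=
  exists Rv Rc, is_app_sim Rv Rc /\ Rv t V W.
Definition sim_c (t : ty) (M N : ccomp t) : Prop :=
  exists Rv Rc, is_app_sim Rv Rc /\ Rc t M N.

End Language.

(* Main.v *)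
Require Import Defs.
From Stdlib Require Import List Arith Lia ClassicalEpsilon.
Import ListNotations.
Set Implicit Arguments.
Arguments VUnit {Sg}. Arguments TLeaf {Sg X}. Arguments TNode {Sg X}. Arguments VZ {Sg}. Arguments VVar {Sg}. Arguments TBot {Sg X}.

Section Ind.
Variable Sg : signature.
Variables (Pv : list ty -> val Sg -> ty -> Prop) (Pc : list ty -> comp Sg -> ty -> Prop).
Hypothesis H_unit : forall G, Pv G VUnit TUnit.
Hypothesis H_z : forall G, Pv G VZ TNat.
Hypothesis H_s : forall G v, vty G v TNat -> Pv G v TNat -> Pv G (VS v) TNat.
Hypothesis H_lam : forall G t t' m, cty (t :: G) m t' -> Pc (t :: G) m t' -> Pv G (VLam t m) (TArr t t').
Hypothesis H_var : forall G n t, nth_error G n = Some t -> Pv G (VVar n) t.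
Hypothesis H_app : forall G v w t t', vty G v (TArr t t') -> Pv G v (TArr t t') -> vty G w t -> Pv G w t -> Pc G (CApp v w) t'.
Hypothesis H_ret : forall G v t, vty G v t -> Pv G v t -> Pc G (CRet v) t.
Hypothesis H_let : forall G m n t t', cty G m t -> Pc G m t -> cty (t :: G) n t' -> Pc (t :: G) n t' -> Pc G (CLet m n) t'.
Hypothesis H_fix : forall G v r t, vty G v (TArr (TArr r t) (TArr r t)) -> Pv G v (TArr (TArr r t) (TArr r t)) -> Pc G (CFix v) (TArr r t).
Hypothesis H_case : forall G v m n t, vty G v TNat -> Pv G v TNat -> cty G m t -> Pc G m t -> cty (TNat :: G) n t -> Pc (TNat :: G) n t -> Pc G (CCase v m n) t.
Hypothesis H_op : forall G s ms t, op_arity Sg s = AFin (length ms) -> Forall (fun m => cty G m t) ms -> Forall (fun m => Pc G m t) ms -> Pc G (COp s ms) t.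
Hypothesis H_opp : forall G s v ms t, op_arity Sg s = APFin (length ms) -> vty G v TNat -> Pv G v TNat -> Forall (fun m => cty G m t) ms -> Forall (fun m => Pc G m t) ms -> Pc G (COpP s v ms) t.
Hypothesis H_opf : forall G s v t, op_arity Sg s = AInf -> vty G v (TArr TNat t) -> Pv G v (TArr TNat t) -> Pc G (COpF s v) t.
Hypothesis H_oppf : forall G s v w t, op_arity Sg s = APInf -> vty G v TNat -> Pv G v TNat -> vty G w (TArr TNat t) -> Pv G w (TArr TNat t) -> Pc G (COpPF s v w) t.

Fixpoint vty_ind2 G v t (H : vty G v t) {struct H} : Pv G v t :=
  match H in vty G v t return Pv G v t with
  | @ty_unit _ G => H_unit G
  | @ty_z _ G => H_z G
  | @ty_s _ _ _ H1 => H_s H1 (vty_ind2 H1)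
  | @ty_lam _ _ _ _ _ H1 => H_lam H1 (cty_ind2 H1)
  | @ty_var _ G n t e => H_var G n e
  end
with cty_ind2 G m t (H : cty G m t) {struct H} : Pc G m t :=
  match H in cty G m t return Pc G m t with
  | @ty_app _ _ _ _ _ _ H1 H2 => H_app H1 (vty_ind2 H1) H2 (vty_ind2 H2)
  | @ty_ret _ _ _ _ H1 => H_ret H1 (vty_ind2 H1)
  | @ty_let _ _ _ _ _ _ H1 H2 => H_let H1 (cty_ind2 H1) H2 (cty_ind2 H2)
  | @ty_fix _ _ _ _ _ H1 => H_fix H1 (vty_ind2 H1)
  | @ty_case _ _ _ _ _ _ H1 H2 H3 => H_case H1 (vty_ind2 H1) H2 (cty_ind2 H2) H3 (cty_ind2 H3)
  | @ty_op _ G0 s0 ms0 t0 Ha Hf => @H_op G0 s0 ms0 t0 Ha Hf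
      ((fix F l (Hl : Forall (fun m => cty _ m _) l) : Forall (fun m => Pc _ m _) l :=
         match Hl with
         | Forall_nil _ => Forall_nil _
         | @Forall_cons _ _ x l' Hx Hr => @Forall_cons _ _ x l' (cty_ind2 Hx) (F _ Hr)
         end) _ Hf)
  | @ty_opp _ G0 s0 v0 ms0 t0 Ha Hv Hf => @H_opp G0 s0 v0 ms0 t0 Ha Hv (vty_ind2 Hv) Hf
      ((fix F l (Hl : Forall (fun m => cty _ m _) l) : Forall (fun m => Pc _ m _) l :=
         match Hl with
         | Forall_nil _ => Forall_nil _
         | @Forall_cons _ _ x l' Hx Hr => @Forall_cons _ _ x l' (cty_ind2 Hx) (F _ Hr)
         end) _ Hf)
  | @ty_opf _ G0 s0 v0 t0 Ha H1 => @H_opf G0 s0 v0 t0 Ha H1 (vty_ind2 H1)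
  | @ty_oppf _ G0 s0 v0 w0 t0 Ha H1 H2 => @H_oppf G0 s0 v0 w0 t0 Ha H1 (vty_ind2 H1) H2 (vty_ind2 H2)
  end.
End Ind.

Section Typing.
Variable Sg : signature.

Ltac weak_tac :=
  intros; simpl in *; try (econstructor; eauto; fail);
  try (econstructor; [eassumption| eapply Forall_impl; [|eassumption]; simpl; eauto]; fail);
  try (econstructor; [eassumption| eauto | eapply Forall_impl; [|eassumption]; simpl; eauto]; fail).

Lemma nth_app1 (G H : list ty) n t : nth_error G n = Some t -> nth_error (G ++ H) n = Some t.
Proof. intro E. rewrite nth_error_app1; auto. apply nth_error_Some. congruence. Qed.

Lemma weaken_v : forall G (v : val Sg) t, vty G v t -> forall H, vty (G ++ H) v t.
Proof.
  apply (@vty_ind2 Sg (fun G v t => forall H, vty (G ++ H) v t) (fun G m t => forall H, cty (G ++ H) m t)); weak_tac.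
  constructor. apply nth_app1; auto.
Qed.
Lemma weaken_c : forall G (m : comp Sg) t, cty G m t -> forall H, cty (G ++ H) m t.
Proof.
  apply (@cty_ind2 Sg (fun G v t => forall H, vty (G ++ H) v t) (fun G m t => forall H, cty (G ++ H) m t)); weak_tac.
  constructor. apply nth_app1; auto.
Qed.
Lemma weaken0 (u : val Sg) s G : vty [] u s -> vty G u s.
Proof. intro H. apply (weaken_v H G). Qed.

Definition SPv G (v : val Sg) t := forall G1 s G2 u, G = G1 ++ s :: G2 -> vty [] u s ->
  vty (G1 ++ G2) (subst_v (length G1) u v) t.
Definition SPc G (m : comp Sg) t := forall G1 s G2 u, G = G1 ++ s :: G2 -> vty [] u s ->
  cty (G1 ++ G2) (subst_c (length G1) u m) t.

Lemma Forall_map_sub (f : comp Sg -> comp Sg) (P Q : comp Sg -> Prop) ms :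
  Forall P ms -> (forall m, P m -> Q (f m)) -> Forall Q (map f ms).
Proof. intros H1 H2; induction H1; simpl; constructor; auto. Qed.


Lemma var_case G1 s G2 (u : val Sg) n t :
  nth_error (G1 ++ s :: G2) n = Some t -> vty [] u s ->
  vty (G1 ++ G2) (subst_v (length G1) u (VVar n)) t.
Proof.
  intros E Hu. simpl.
  destruct (Nat.eqb_spec n (length G1)).
  - subst. rewrite nth_error_app2 in E by lia. rewrite Nat.sub_diag in E. simpl in E.
    inversion E; subst. apply weaken0; auto.
  - destruct (Nat.ltb_spec (length G1) n).
    + constructor. rewrite nth_error_app2 in E by lia. rewrite nth_error_app2 by lia.
      destruct (n - length G1) eqn:Hn; [lia|]. simpl in E.
      replace (n - 1 - length G1) with n1 by lia. auto.
    + constructor. rewrite nth_error_app1 in E by lia. rewrite nth_error_app1 by lia. auto.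
Qed.

Ltac binder := match goal with |- cty (?a :: ?G1 ++ ?G2) (subst_c (S (length ?G1)) ?u ?m) ?t =>
  change (cty ((a :: G1) ++ G2) (subst_c (length (a :: G1)) u m) t);
  match goal with H : forall G3 s0 G4 u, _ = _ -> _ -> cty _ (subst_c _ _ m) _ |- _ =>
    eapply H; [reflexivity|eassumption] end end.

Lemma subst_v_ty : forall G (v : val Sg) t, vty G v t -> SPv G v t.
Proof.
  apply (@vty_ind2 Sg SPv SPc); unfold SPv, SPc in *; intros; subst; simpl in *.
  all: try (econstructor; eauto; fail).
  all: try (eapply var_case; eauto; fail).
  all: econstructor; eauto; try binder.
  all: try (rewrite length_map; eauto).
  all: match goal with H : Forall _ _ |- _ => eapply Forall_map_sub; [exact H|]; intros m0 Hm0; cbv beta in Hm0; eapply Hm0; [reflexivity|eassumption] end.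
Qed.

Lemma subst_c_ty : forall G (m : comp Sg) t, cty G m t -> SPc G m t.
Proof.
  apply (@cty_ind2 Sg SPv SPc); unfold SPv, SPc in *; intros; subst; simpl in *.
  all: try (econstructor; eauto; fail).
  all: try (eapply var_case; eauto; fail).
  all: econstructor; eauto; try binder.
  all: try (rewrite length_map; eauto).
  all: match goal with H : Forall _ _ |- _ => eapply Forall_map_sub; [exact H|]; intros m0 Hm0; cbv beta in Hm0; eapply Hm0; [reflexivity|eassumption] end.
Qed.

Lemma subst0 (m : comp Sg) s t u : cty [s] m t -> vty [] u s -> cty [] (subst_c 0 u m) t.
Proof. intros H Hu. exact (subst_c_ty H [] [] eq_refl Hu). Qed.

Definition rtyped (r : res Sg) t : Prop :=
  match r with
  | RRet v => vty [] v t
  | RNode s p k => forall c : child_of (op_arity Sg s), cty [] (k (child_nat _ c)) t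
  end.

Lemma num_ty n : vty [] (num Sg n) TNat.
Proof. induction n; simpl; constructor; auto. Qed.

Lemma sr : forall (m : comp Sg) r, eval m r -> forall t, cty [] m t -> rtyped r t.
Proof.
  induction 1; intros t0 Ht; simpl.
  - inversion Ht; subst; auto.
  - inversion Ht; subst. match goal with H : vty _ (VLam _ _) _ |- _ => inversion H; subst end.
    apply IHeval. eapply subst0; eauto.
  - inversion Ht; subst. match goal with H : cty [] m _ |- _ => specialize (IHeval1 _ H) end.
    simpl in IHeval1. apply IHeval2. eapply subst0; eauto.
  - inversion Ht; subst. intro c. match goal with H : cty [] m _ |- _ => specialize (IHeval _ H c) end.
    simpl in IHeval. econstructor; eauto.
  - inversion Ht; subst. match goal with H : vty _ (VLam _ _) _ |- _ => inversion H; subst end.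
    apply IHeval. econstructor. eassumption.
    constructor. econstructor.
    + constructor. apply (weaken0 _ H2).
    + econstructor; constructor; reflexivity.
  - inversion Ht; subst. auto.
  - inversion Ht; subst. apply IHeval. eapply subst0; eauto.
    match goal with H : vty _ (VS _) _ |- _ => inversion H; subst end. auto.
  - inversion Ht; subst. generalize (op_arity Sg s) H. intros a Ha; subst a. simpl.
    intros [i Hi]. simpl. match goal with H : Forall _ _ |- _ => rewrite Forall_forall in H; apply H end. apply nth_In; auto.
  - inversion Ht; subst. generalize (op_arity Sg s) H. intros a Ha; subst a. simpl.
    intros [i Hi]. simpl. match goal with H : Forall _ _ |- _ => rewrite Forall_forall in H; apply H end. apply nth_In; auto.
  - inversion Ht; subst. generalize (op_arity Sg s) H. intros a Ha; subst a. simpl.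
    intros i. econstructor; eauto. apply num_ty.
  - inversion Ht; subst. generalize (op_arity Sg s) H. intros a Ha; subst a. simpl.
    intros i. econstructor; eauto. apply num_ty.
Qed.

Definition frob X (t : tree Sg X) : tree Sg X :=
  match t with TBot => TBot | TLeaf x => TLeaf x | TNode s p k => TNode s p k end.
Lemma frob_eq X (t : tree Sg X) : t = frob t.
Proof. destruct t; reflexivity. Qed.

Lemma optree_unfold (m : comp Sg) : optree m =
  match eval_res m with
  | None => TBot
  | Some (RRet v) => TLeaf v
  | Some (RNode s p k) => TNode s p (fun i => optree (k (child_nat _ i)))
  end.
Proof. rewrite (frob_eq (optree m)). simpl. destruct (eval_res m) as [[]|]; reflexivity. Qed.

Lemma tmem_unfold X (P : X -> Prop) (t : tree Sg X) : tmem P t =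
  match t with
  | TBot => TBot
  | TLeaf x => if excluded_middle_informative (P x) then TLeaf tt else TBot
  | TNode s p k => TNode s p (fun i => tmem P (k i))
  end.
Proof. rewrite (frob_eq (tmem P t)). simpl. destruct t; try reflexivity. simpl. destruct excluded_middle_informative; reflexivity. Qed.

Lemma eval_res_some (m : comp Sg) r : eval_res m = Some r -> eval m r.
Proof.
  unfold eval_res. destruct excluded_middle_informative as [e|]; [|discriminate].
  intro E; inversion E; subst. apply proj2_sig.
Qed.

Lemma tmem_mono X (P Q : X -> Prop) : (forall x, P x -> Q x) ->
  forall t : tree Sg X, tle (tmem P t) (tmem Q t).
Proof.
  intro HPQ. cofix CIH. intro t. rewrite (tmem_unfold P t), (tmem_unfold Q t).
  destruct t as [|x|s p k].
  - constructor.
  - destruct (excluded_middle_informative (P x)); [|constructor].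
    destruct (excluded_middle_informative (Q x)); [constructor|]. exfalso; auto.
  - constructor. intro i. apply CIH.
Qed.

Lemma tmem_mono_typed t (P Q : val Sg -> Prop) : (forall v, vty [] v t -> P v -> Q v) ->
  forall m, cty [] m t -> tle (tmem P (optree m)) (tmem Q (optree m)).
Proof.
  intro HPQ. cofix CIH. intros m Hm. rewrite (optree_unfold m).
  destruct (eval_res m) as [[v|s p k]|] eqn:E.
  - rewrite (tmem_unfold P), (tmem_unfold Q).
    pose proof (sr (eval_res_some _ E) Hm) as Hv. simpl in Hv.
    destruct (excluded_middle_informative (P v)); [|constructor].
    destruct (excluded_middle_informative (Q v)); [constructor|]. exfalso; auto.
  - rewrite (tmem_unfold P), (tmem_unfold Q).
    pose proof (sr (eval_res_some _ E) Hm) as Hk. simpl in Hk.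
    constructor. intro i. apply CIH. apply Hk.
  - rewrite (tmem_unfold P), (tmem_unfold Q). constructor.
Qed.

End Typing.

Section Main.
Variables (S : signature) (O : Type) (sem : O -> tree S unit -> Prop).
Hypothesis Hup : upward_closed sem.

Lemma num_canon (v : val S) : vty [] v TNat -> exists n, v = num S n.
Proof.
  induction v; intro H; inversion H; subst.
  - exists 0; reflexivity.
  - destruct (IHv H2) as [n ->]. exists (Datatypes.S n); reflexivity.
  - destruct n; discriminate.
Qed.

Section Sound.
Variables (Rv : forall t, cval S t -> cval S t -> Prop) (Rc : forall t, ccomp S t -> ccomp S t -> Prop).
Hypothesis Hsim : is_app_sim sem Rv Rc.

Fixpoint sound_v t (phi : vform S O t) {struct phi} : forall V W : cval S t, Rv V W ->
  vsat sem phi (proj1_sig V) -> vsat sem phi (proj1_sig W)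
with sound_c t (Phi : cform S O t) {struct Phi} : forall M N : ccomp S t, Rc M N ->
  csat sem Phi (proj1_sig M) -> csat sem Phi (proj1_sig N).
Proof.
  - destruct Hsim as [H1 [H2 H3]].
    destruct phi as [n|t t' U Phi|t I f|t I f]; simpl; intros V W HR HV.
    + rewrite <- (H1 _ _ HR). exact HV.
    + exact (sound_c _ Phi (capp V U) (capp W U) (H3 _ _ _ _ HR U) HV).
    + intro i. exact (sound_v _ (f i) V W HR (HV i)).
    + destruct HV as [i Hi]. exists i. exact (sound_v _ (f i) V W HR Hi).
  - destruct Hsim as [H1 [H2 H3]].
    destruct Phi as [t o phi|t I f|t I f]; simpl; intros M N HR HM.
    + pose (A := fun V : cval S t => vsat sem phi (proj1_sig V)).
      assert (HA : omod sem o A (optree (proj1_sig M))).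
      { unfold omod. eapply Hup; [exact HM|]. apply (tmem_mono_typed (t := t)); [|exact (proj2_sig M)].
        intros v Hv Hs. exists Hv. exact Hs. }
      pose proof (H2 _ _ _ HR A o HA) as HB. unfold omod in HB.
      eapply Hup; [exact HB|]. apply tmem_mono.
      intros v [h [x [Ax Rx]]]. exact (sound_v _ phi x (exist _ v h) Rx Ax).
    + intro i. exact (sound_c _ (f i) M N HR (HM i)).
    + destruct HM as [i Hi]. exists i. exact (sound_c _ (f i) M N HR Hi).
Qed.
End Sound.

Definition ext_idx t (V : cval S t) : Type :=
  {P : val S -> Prop | (exists phi : vform S O t, forall v, vsat sem phi v <-> P v) /\ P (proj1_sig V)}.
Definition chi t (V : cval S t) : vform S O t :=
  FVAnd (fun i : ext_idx V => proj1_sig (constructive_indefinite_description _ (proj1 (proj2_sig i)))).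

Lemma chi_spec t (V : cval S t) w :
  vsat sem (chi V) w <-> forall phi : vform S O t, vsat sem phi (proj1_sig V) -> vsat sem phi w.
Proof.
  split.
  - intros H phi Hphi. simpl in H.
    pose (i := exist (fun P => (exists phi : vform S O t, forall v, vsat sem phi v <-> P v) /\ P (proj1_sig V))
                 (fun v => vsat sem phi v) (conj (ex_intro _ phi (fun v => iff_refl _)) Hphi) : ext_idx V).
    specialize (H i).
    destruct (constructive_indefinite_description _ (proj1 (proj2_sig i))) as [phi' Hphi']. simpl in H.
    apply Hphi' in H. exact H.
  - intros H i. simpl.
    destruct (constructive_indefinite_description _ (proj1 (proj2_sig i))) as [phi' Hphi']. simpl.
    apply H. apply Hphi'. exact (proj2 (proj2_sig i)).
Qed.

Definition phiA t (A : cval S t -> Prop) : vform S O t :=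
  FVOr (fun j : {V : cval S t | A V} => chi (proj1_sig j)).

Lemma lpre_sim : is_app_sim sem (fun t => @lpre_v S O sem t) (fun t => @lpre_c S O sem t).
Proof.
  split; [|split].
  - intros [v hv] [w hw] H. simpl in *. destruct (num_canon hv) as [n ->].
    exact (eq_sym (H (@FNum S O n) eq_refl)).
  - intros t [m hm] [n hn] H A o HA. unfold omod in *. simpl in *.
    assert (HM : csat sem (FMod o (phiA A)) m).
    { simpl. eapply Hup; [exact HA|]. apply tmem_mono.
      intros v [h Av]. exists (exist _ (exist _ v h) Av). simpl. apply chi_spec. auto. }
    apply H in HM. simpl in HM. eapply Hup; [exact HM|].
    apply (tmem_mono_typed (t := t)); [|exact hn].
    intros v hv [[V AV] HV]. pose proof (proj1 (chi_spec V v) HV) as HV2.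
    exists hv. exists V. split; [exact AV|]. intros phi Hphi. simpl. apply HV2; auto.
  - intros t' t V W H U Phi HPhi. simpl in *.
    exact (H (FMap U Phi) HPhi).
Qed.

End Main.

Theorem theorem2 (S : signature) (O : Type) (sem : O -> tree S unit -> Prop) :
  upward_closed sem ->
  (forall (t : ty) (V W : cval S t), lpre_v sem V W <-> sim_v sem V W) /\
  (forall (t : ty) (M N : ccomp S t), lpre_c sem M N <-> sim_c sem M N).
Proof.
  intro Hup. split.
  - intros t V W. split.
    + intro H. exists (fun t => @lpre_v S O sem t), (fun t => @lpre_c S O sem t).
      split; [apply lpre_sim; auto | exact H].
    + intros [Rv [Rc [Hs HR]]] phi. apply (sound_v Hup Hs phi V W HR).
  - intros t M N. split.
    + intro H. exists (fun t => @lpre_v S O sem t), (fun t => @lpre_c S O sem t).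
      split; [apply lpre_sim; auto | exact H].
    + intros [Rv [Rc [Hs HR]]] Phi. apply (sound_c Hup Hs Phi M N HR).
Qed.
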